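(* Let $Y=\{(x,y)\in\mathbb{R}^2:(x/a)^2+y^2=1\}$ with $1<a\le\sqrt2$, and let $p\in Y$. There exists a unique equilateral triangle inscribed in $Y$ (all three vertices on $Y$) having $p$ as one of its vertices.
   Context: Equilateral means with respect to the Euclidean metric on $\mathbb{R}^2$. *)

(* Defs.v *)
From Stdlib Require Import Reals.
Open Scope R_scope.

Definition point : Type := (R * R)%type.

Definition dist2 (p q : point) : R :=
  sqrt ((fst p - fst q) ^ 2 + (snd p - snd q) ^ 2).

Definition on_ellipse (a : R) (p : point) : Prop :=
  (fst p / a) ^ 2 + (snd p) ^ 2 = 1.

Definition equilateral (p q r : point) : Prop :=
  p <> q /\ q <> r /\ r <> p /\
  dist2 p q = dist2 q r /\ dist2 q r = dist2 r p.

Definition inscribed_equilateral (a : R) (p q r : point) : Prop :=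
  on_ellipse a p /\ on_ellipse a q /\ on_ellipse a r /\ equilateral p q r.

(* Main.v *)
Require Import Defs.
From Stdlib Require Import Reals Lra Lia Psatz.
Open Scope R_scope.

Definition Hf (C1 C2 D1 D2 u1 u2 : R) : R :=
  (u1^2+u2^2)*(C1*u1 - C2*u2) + D1*(u1^3-3*u1*u2^2) - D2*(3*u1^2*u2 - u2^3).

Definition Pf (f3 f2 f1 f0 t : R) := f3*t^3 + f2*t^2 + f1*t + f0.

Lemma mono_unique f3 f2 f1 f0 t t' : 0 < f3 -> f2^2 < 3*f1*f3 ->
  Pf f3 f2 f1 f0 t = 0 -> Pf f3 f2 f1 f0 t' = 0 -> t = t'.
Proof.
  unfold Pf; intros h3 hd e1 e2.
  assert (Hq : 0 < f3*(t^2+t*t'+t'^2) + f2*(t+t') + f1).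
  { assert (4*f3*(f3*(t^2+t*t'+t'^2) + f2*(t+t') + f1) =
      3*(f3*(t+t') + 2*f2/3)^2 + 4/3*(3*f1*f3 - f2^2) + f3^2*(t-t')^2) by field.
    assert (0 < 4*f3*(f3*(t^2+t*t'+t'^2) + f2*(t+t') + f1)).
    { rewrite H. pose proof (pow2_ge_0 (f3*(t+t') + 2*f2/3)).
      pose proof (pow2_ge_0 (f3*(t-t'))). rewrite Rpow_mult_distr in H1. lra. }
    nra. }
  assert (E: (t-t')*(f3*(t^2+t*t'+t'^2) + f2*(t+t') + f1) = 0).
  { transitivity ((f3*t^3 + f2*t^2 + f1*t + f0) - (f3*t'^3 + f2*t'^2 + f1*t' + f0)); [ring|lra]. }
  apply Rmult_integral in E; lra.
Qed.

Lemma cubic_root f3 f2 f1 f0 : 0 < f3 -> exists t, Pf f3 f2 f1 f0 t = 0.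
Proof.
  intros h3.
  set (M := 1 + (Rabs f0 + Rabs f1 + Rabs f2)/f3).
  assert (hM : f3*M = f3 + Rabs f0 + Rabs f1 + Rabs f2) by (unfold M; field; lra).
  assert (hM1 : 1 <= M).
  { unfold M. assert (0 <= (Rabs f0 + Rabs f1 + Rabs f2)/f3).
    { unfold Rdiv; apply Rmult_le_pos; [|left; apply Rinv_0_lt_compat; lra]. pose proof (Rabs_pos f0); pose proof (Rabs_pos f1); pose proof (Rabs_pos f2); lra. }
    lra. }
  pose proof (Rle_abs f0); pose proof (Rle_abs f1); pose proof (Rle_abs f2).
  pose proof (Rabs_Ropp f0); pose proof (Rabs_Ropp f1); pose proof (Rabs_Ropp f2).
  pose proof (Rle_abs (-f0)); pose proof (Rle_abs (-f1)); pose proof (Rle_abs (-f2)).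
  assert (hp : 0 < Pf f3 f2 f1 f0 M).
  { unfold Pf.
    assert (M^2 >= M) by nra.
    assert (M^3 = M*M^2) by ring.
    nra. }
  assert (hn : Pf f3 f2 f1 f0 (-M) < 0).
  { unfold Pf.
    assert (M^2 >= M) by nra.
    assert ((-M)^3 = -(M*M^2)) by ring.
    assert ((-M)^2 = M^2) by ring.
    nra. }
  destruct (IVT (Pf f3 f2 f1 f0) (-M) M) as [z [_ hz]].
  - unfold Pf; reg.
  - lra.
  - exact hn.
  - exact hp.
  - exists z; exact hz.
Qed.

Section Proj.
Variables C1 C2 D1 D2 : R.
Let N2 := C1^2 + C2^2.
Let T1 := C1^3 - 3*C1*C2^2.
Let T2 := C2^3 - 3*C1^2*C2.
Let c := D1*T1 - D2*T2.
Let d := D1*T2 + D2*T1.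
Let N := N2^2.

Lemma Hf_chart u1 u2 :
  N2^3 * Hf C1 C2 D1 D2 u1 u2 =
  let X := C1*u1 - C2*u2 in let Y := C2*u1 + C1*u2 in
  (N+c)*X^3 + (-3*d)*X^2*Y + (N-3*c)*X*Y^2 + d*Y^3.
Proof. unfold Hf, N, c, d, T1, T2, N2; simpl; ring. Qed.

Lemma cd_norm : c^2 + d^2 = (D1^2+D2^2)*N2^3.
Proof. unfold c, d, T1, T2, N2; ring. Qed.

Hypothesis hN2 : 0 < N2.
Hypothesis hD : 9*(D1^2+D2^2) < N2.

Lemma f_facts : 0 < N + c /\ (-3*d)^2 < 3*(N-3*c)*(N+c).
Proof.
  pose proof cd_norm as E.
  assert (hK : 9*(c^2+d^2) < N^2).
  { rewrite E. unfold N. assert (0 < N2^3) by (apply pow_lt; lra).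
    assert (9 * (D1 ^ 2 + D2 ^ 2) * N2^3 < N2 * N2^3) by (apply Rmult_lt_compat_r; lra).
    replace ((N2^2)^2) with (N2*N2^3) by ring. lra. }
  assert (hN : 0 < N) by (unfold N; apply pow_lt; lra).
  assert (h3c : 3*Rabs c < N).
  { assert (9*c^2 < N^2) by nra.
    apply Rsqr_incrst_0; [ | pose proof (Rabs_pos c); lra | lra].
    unfold Rsqr. replace (3*Rabs c*(3*Rabs c)) with (9*(Rabs c*Rabs c)) by ring.
    rewrite <- Rabs_mult. rewrite Rabs_right by nra. nra. }
  pose proof (Rle_abs c); pose proof (Rle_abs (-c)); rewrite Rabs_Ropp in *.
  split; [lra|].
  assert ((-3*d)^2 = 9*d^2) by ring.
  assert (3*(N-3*c)*(N+c) = 3*N^2 - 6*N*c - 9*c^2) by ring.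
  nra.
Qed.

Lemma proj_unique u1 u2 v1 v2 :
  0 < u1^2+u2^2 -> 0 < v1^2+v2^2 ->
  Hf C1 C2 D1 D2 u1 u2 = 0 -> Hf C1 C2 D1 D2 v1 v2 = 0 ->
  u1*v2 - u2*v1 = 0.
Proof.
  intros hu hv e1 e2.
  destruct f_facts as [h3 hd].
  pose proof (Hf_chart u1 u2) as G1. pose proof (Hf_chart v1 v2) as G2.
  rewrite e1 in G1; rewrite e2 in G2. cbv zeta in G1, G2.
  set (X := C1*u1 - C2*u2) in *. set (Y := C2*u1 + C1*u2) in *.
  set (X' := C1*v1 - C2*v2) in *. set (Y' := C2*v1 + C1*v2) in *.
  assert (iu1 : N2*u1 = C1*X + C2*Y) by (unfold X, Y, N2; ring).
  assert (iu2 : N2*u2 = -C2*X + C1*Y) by (unfold X, Y, N2; ring).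
  assert (iv1 : N2*v1 = C1*X' + C2*Y') by (unfold X', Y', N2; ring).
  assert (iv2 : N2*v2 = -C2*X' + C1*Y') by (unfold X', Y', N2; ring).
  assert (hY : Y <> 0).
  { intro hY0. rewrite hY0 in G1.
    assert (X = 0).
    { assert ((N+c)*X^3 = 0) by (rewrite Rmult_0_r in G1; ring_simplify in G1; lra).
      apply Rmult_integral in H; destruct H; [lra|]. destruct (Req_dec_T X 0) as [hx|hx]; [exact hx| exfalso; exact (pow_nonzero _ 3 hx H)]. }
    assert (N2*u1 = 0) by (rewrite iu1, H, hY0; ring).
    assert (N2*u2 = 0) by (rewrite iu2, H, hY0; ring).
    apply Rmult_integral in H0; apply Rmult_integral in H1. nra. }
  assert (hY' : Y' <> 0).
  { intro hY0. rewrite hY0 in G2.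
    assert (X' = 0).
    { assert ((N+c)*X'^3 = 0) by (rewrite Rmult_0_r in G2; ring_simplify in G2; lra).
      apply Rmult_integral in H; destruct H; [lra|]. destruct (Req_dec_T X' 0) as [hx|hx]; [exact hx| exfalso; exact (pow_nonzero _ 3 hx H)]. }
    assert (N2*v1 = 0) by (rewrite iv1, H, hY0; ring).
    assert (N2*v2 = 0) by (rewrite iv2, H, hY0; ring).
    apply Rmult_integral in H0; apply Rmult_integral in H1. nra. }
  assert (P1 : Pf (N+c) (-3*d) (N-3*c) d (X/Y) = 0).
  { unfold Pf. apply (Rmult_eq_reg_r (Y^3)); [|apply pow_nonzero; auto].
    rewrite Rmult_0_l. transitivity (N2^3*0); [|ring]. rewrite G1. field. auto. }
  assert (P2 : Pf (N+c) (-3*d) (N-3*c) d (X'/Y') = 0).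
  { unfold Pf. apply (Rmult_eq_reg_r (Y'^3)); [|apply pow_nonzero; auto].
    rewrite Rmult_0_l. transitivity (N2^3*0); [|ring]. rewrite G2. field. auto. }
  assert (hd' : (-3*d)^2 < 3*(N-3*c)*(N+c)) by exact hd.
  pose proof (mono_unique _ _ _ _ _ _ h3 hd P1 P2) as Et.
  assert (EX : X*Y' = X'*Y).
  { apply (Rmult_eq_reg_r (/(Y*Y'))). 
    - replace (X*Y'*/(Y*Y')) with (X/Y) by (field; auto).
      replace (X'*Y*/(Y*Y')) with (X'/Y') by (field; auto). exact Et.
    - apply Rinv_neq_0_compat. apply Rmult_integral_contrapositive; auto. }
  apply (Rmult_eq_reg_l (N2*N2)); [|nra].
  replace (N2*N2*(u1*v2-u2*v1)) with ((N2*u1)*(N2*v2) - (N2*u2)*(N2*v1)) by ring.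
  rewrite iu1, iu2, iv1, iv2. unfold N2.
  replace ((C1 * X + C2 * Y) * (- C2 * X' + C1 * Y') - (- C2 * X + C1 * Y) * (C1 * X' + C2 * Y'))
    with ((C1^2+C2^2)*(X*Y' - X'*Y)) by ring.
  rewrite EX. ring.
Qed.

Lemma root_exists : exists w1 w2, 0 < w1^2+w2^2 /\ Hf C1 C2 D1 D2 w1 w2 = 0.
Proof.
  destruct f_facts as [h3 hd].
  destruct (cubic_root _ (-3*d) (N-3*c) d h3) as [t ht].
  exists (C1*t + C2), (C1 - C2*t).
  split.
  - replace ((C1*t+C2)^2 + (C1-C2*t)^2) with (N2*(1+t^2)) by (unfold N2; ring).
    apply Rmult_lt_0_compat; [lra|]. pose proof (pow2_ge_0 t); lra.
  - pose proof (Hf_chart (C1*t + C2) (C1 - C2*t)) as G. cbv zeta in G.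
    apply (Rmult_eq_reg_l (N2^3)); [|apply pow_nonzero; lra].
    rewrite G, Rmult_0_r. unfold Pf in ht.
    replace (C1 * (C1 * t + C2) - C2 * (C1 - C2 * t)) with (N2*t) by (unfold N2; ring).
    replace (C2 * (C1 * t + C2) + C1 * (C1 - C2 * t)) with N2 by (unfold N2; ring).
    transitivity (N2^3 * ((N + c) * t ^ 3 + -3 * d * t ^ 2 + (N - 3 * c) * t + d)); [ring|].
    rewrite ht; ring.
Qed.
End Proj.

Definition Lf (A B w1 w2 : R) := 2*(A*w1 + B*w2).
Definition Qf (b w1 w2 : R) := b*w1^2 + w2^2.
Definition Rr1 (s w1 w2 : R) := w1/2 - s*w2/2.
Definition Rr2 (s w1 w2 : R) := s*w1/2 + w2/2.
Definition Fg s b A B w1 w2 :=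
  Lf A B w1 w2 * Qf b (Rr1 s w1 w2) (Rr2 s w1 w2) - Lf A B (Rr1 s w1 w2) (Rr2 s w1 w2) * Qf b w1 w2.
Definition Ef b A B u1 u2 := Lf A B u1 u2 + Qf b u1 u2.

Lemma harm s b A B w1 w2 : s*s = 3 ->
  Fg s b A B w1 w2 = Hf (A - s*b*B) (-(b*B+s*A)) ((1-b)*A/2) (-(1-b)*B/2) w1 w2.
Proof.
  intro hs.
  assert (Fg s b A B w1 w2 - Hf (A - s*b*B) (-(b*B+s*A)) ((1-b)*A/2) (-(1-b)*B/2) w1 w2
    = 2*(A*w1+B*w2)*(b*w2^2+w1^2)/4*(s*s-3)).
  { unfold Fg, Hf, Lf, Qf, Rr1, Rr2. field. }
  rewrite hs in H. lra.
Qed.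

Lemma Q_pos b w1 w2 : 0 < b -> 0 < w1^2+w2^2 -> 0 < Qf b w1 w2.
Proof. unfold Qf; intros; nra. Qed.

Lemma R_norm s w1 w2 : s*s = 3 -> (Rr1 s w1 w2)^2 + (Rr2 s w1 w2)^2 = w1^2+w2^2.
Proof. intro hs. unfold Rr1, Rr2.
  replace ((w1 / 2 - s * w2 / 2) ^ 2 + (s * w1 / 2 + w2 / 2) ^ 2) with ((1+s*s)/4*(w1^2+w2^2)) by field.
  rewrite hs; field. Qed.

Lemma R_diff s w1 w2 : s*s = 3 -> (w1 - Rr1 s w1 w2)^2 + (w2 - Rr2 s w1 w2)^2 = w1^2+w2^2.
Proof. intro hs. unfold Rr1, Rr2.
  replace ((w1 - (w1 / 2 - s * w2 / 2)) ^ 2 + (w2 - (s * w1 / 2 + w2 / 2)) ^ 2) with ((1+s*s)/4*(w1^2+w2^2)) by field.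
  rewrite hs; field. Qed.

Section Geo.
Variables s b A B : R.
Hypothesis hs : s*s = 3.
Hypothesis hb1 : 1/2 <= b.
Hypothesis hb2 : b < 1.
Hypothesis hAB : 0 < A^2 + B^2.

Let C1 := A - s*b*B.
Let C2 := -(b*B+s*A).
Let D1 := (1-b)*A/2.
Let D2 := -(1-b)*B/2.

Lemma N2_val : C1^2 + C2^2 = 4*A^2 + 4*b^2*B^2.
Proof.
  unfold C1, C2.
  replace ((A - s * b * B) ^ 2 + (- (b * B + s * A)) ^ 2) with (A^2 + b^2*B^2 + s*s*(b^2*B^2 + A^2)) by ring.
  rewrite hs; ring.
Qed.

Lemma hN2 : 0 < C1^2 + C2^2.
Proof. rewrite N2_val. assert (1 <= 4*b^2) by nra. assert (B^2 <= 4*b^2*B^2) by nra. nra. Qed.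

Lemma hD : 9*(D1^2+D2^2) < C1^2 + C2^2.
Proof.
  rewrite N2_val. unfold D1, D2.
  replace (9 * (((1 - b) * A / 2) ^ 2 + (- (1 - b) * B / 2) ^ 2)) with (9*(1-b)^2/4*(A^2+B^2)) by field.
  assert ((1-b)^2 <= 1/4) by nra.
  assert (1 <= 4*b^2) by nra.
  nra.
Qed.

Lemma L_nonzero w1 w2 : 0 < w1^2+w2^2 -> Fg s b A B w1 w2 = 0 -> Lf A B w1 w2 <> 0.
Proof.
  intros hw hF hL.
  unfold Fg in hF. rewrite hL in hF.
  assert (hQ : 0 < Qf b w1 w2) by (apply Q_pos; lra).
  assert (hL2 : Lf A B (Rr1 s w1 w2) (Rr2 s w1 w2) = 0).
  { assert (Lf A B (Rr1 s w1 w2) (Rr2 s w1 w2) * Qf b w1 w2 = 0) by lra.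
    apply Rmult_integral in H; destruct H; lra. }
  unfold Lf, Rr1, Rr2 in hL, hL2.
  assert (e1 : A*w1 + B*w2 = 0) by lra.
  assert (e2 : s*(B*w1 - A*w2) = 0) by lra.
  assert (hs0 : s <> 0) by (intro; subst; lra).
  apply Rmult_integral in e2; destruct e2 as [e2|e2]; [contradiction|].
  assert ((A^2+B^2)*w1 = 0) by nra.
  assert ((A^2+B^2)*w2 = 0) by nra.
  apply Rmult_integral in H; apply Rmult_integral in H0. nra.
Qed.

Lemma Ef_scale lam x y : Ef b A B (lam*x) (lam*y) = lam*(Lf A B x y + lam*Qf b x y).
Proof. unfold Ef, Lf, Qf; ring. Qed.

Lemma R_scale lam x y : Rr1 s (lam*x) (lam*y) = lam * Rr1 s x y /\ Rr2 s (lam*x) (lam*y) = lam * Rr2 s x y.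
Proof. unfold Rr1, Rr2; split; field. Qed.

Lemma existence : exists u1 u2, 0 < u1^2+u2^2 /\ Ef b A B u1 u2 = 0 /\
  Ef b A B (Rr1 s u1 u2) (Rr2 s u1 u2) = 0.
Proof.
  destruct (root_exists C1 C2 D1 D2 hN2 hD) as [w1 [w2 [hw hH]]].
  assert (hF : Fg s b A B w1 w2 = 0) by (rewrite harm; auto).
  pose proof (L_nonzero w1 w2 hw hF) as hL.
  assert (hQ : 0 < Qf b w1 w2) by (apply Q_pos; lra).
  set (lam := - Lf A B w1 w2 / Qf b w1 w2).
  assert (hlam : lam <> 0).
  { unfold lam. intro h. apply hL. 
    apply (Rmult_eq_reg_r (/ Qf b w1 w2)); [| apply Rinv_neq_0_compat; lra].
    unfold Rdiv in h. lra. }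
  exists (lam*w1), (lam*w2). split; [|split].
  - replace ((lam*w1)^2 + (lam*w2)^2) with (lam^2*(w1^2+w2^2)) by ring.
    apply Rmult_lt_0_compat; auto. assert (0 < lam*lam) by (apply Rsqr_pos_lt; auto). nra.
  - rewrite Ef_scale. unfold lam. field. lra.
  - destruct (R_scale lam w1 w2) as [-> ->]. rewrite Ef_scale.
    unfold Fg in hF.
    set (L1 := Lf A B w1 w2) in *. set (Q1 := Qf b w1 w2) in *.
    set (L2 := Lf A B (Rr1 s w1 w2) (Rr2 s w1 w2)) in *.
    set (Q2 := Qf b (Rr1 s w1 w2) (Rr2 s w1 w2)) in *.
    unfold lam. apply Rmult_eq_0_compat_l.
    apply (Rmult_eq_reg_r Q1); [|lra]. rewrite Rmult_0_l.
    field_simplify; [|lra]. unfold Rdiv. 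
    replace (L2 * Q1 - L1 * Q2) with 0 by lra. ring.
Qed.

Lemma Fg_of_E u1 u2 : Ef b A B u1 u2 = 0 -> Ef b A B (Rr1 s u1 u2) (Rr2 s u1 u2) = 0 ->
  Fg s b A B u1 u2 = 0.
Proof.
  unfold Ef, Fg; intros e1 e2.
  replace (Lf A B u1 u2) with (- Qf b u1 u2) by lra.
  replace (Lf A B (Rr1 s u1 u2) (Rr2 s u1 u2)) with (- Qf b (Rr1 s u1 u2) (Rr2 s u1 u2)) by lra.
  ring.
Qed.

Lemma uniqueness u1 u2 v1 v2 : 0 < u1^2+u2^2 -> 0 < v1^2+v2^2 ->
  Ef b A B u1 u2 = 0 -> Ef b A B (Rr1 s u1 u2) (Rr2 s u1 u2) = 0 ->
  Ef b A B v1 v2 = 0 -> Ef b A B (Rr1 s v1 v2) (Rr2 s v1 v2) = 0 ->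
  v1 = u1 /\ v2 = u2.
Proof.
  intros hu hv e1 e2 e3 e4.
  pose proof (Fg_of_E _ _ e1 e2) as F1. pose proof (Fg_of_E _ _ e3 e4) as F2.
  rewrite harm in F1, F2 by auto.
  pose proof (proj_unique C1 C2 D1 D2 hN2 hD u1 u2 v1 v2 hu hv F1 F2) as hx.
  set (mu := (u1*v1+u2*v2)/(u1^2+u2^2)).
  assert (ev1 : v1 = mu*u1).
  { unfold mu. apply (Rmult_eq_reg_r (u1^2+u2^2)); [|lra]. field_simplify; [|lra].
    replace (v1 * u1 ^ 2 + v1 * u2 ^ 2) with (u1 ^ 2 * v1 + u1 * u2 * v2 - u2*(u1*v2-u2*v1)) by ring.
    rewrite hx. ring. }
  assert (ev2 : v2 = mu*u2).
  { unfold mu. apply (Rmult_eq_reg_r (u1^2+u2^2)); [|lra]. field_simplify; [|lra].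
    replace (v2 * u1 ^ 2 + v2 * u2 ^ 2) with (u1 * u2 * v1 + u2^2 * v2 + u1*(u1*v2-u2*v1)) by ring.
    rewrite hx. ring. }
  rewrite ev1, ev2 in e3. rewrite Ef_scale in e3.
  unfold Ef in e1.
  assert (hmu : mu <> 0).
  { intro h. rewrite h in ev1, ev2. subst. nra. }
  assert (hQ : 0 < Qf b u1 u2) by (apply Q_pos; lra).
  assert (mu = 1).
  { apply Rmult_integral in e3. destruct e3 as [h|h]; [contradiction|].
    replace (Lf A B u1 u2) with (- Qf b u1 u2) in h by lra.
    assert ((mu - 1)*Qf b u1 u2 = 0) by lra.
    apply Rmult_integral in H; destruct H; lra. }
  rewrite H in ev1, ev2. lra.
Qed.
End Geo.

Lemma sq_pos x : x <> 0 -> 0 < x^2.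
Proof. intros; simpl; rewrite Rmult_1_r; apply Rsqr_pos_lt; auto. Qed.

Lemma sq_opp x : (-x)^2 = x^2.
Proof. ring. Qed.

Lemma rot_lemma s u1 u2 v1 v2 : s*s = 3 -> 0 < u1^2+u2^2 ->
  v1^2+v2^2 = u1^2+u2^2 -> (u1-v1)^2+(u2-v2)^2 = u1^2+u2^2 ->
  (v1 = Rr1 s u1 u2 /\ v2 = Rr2 s u1 u2) \/ (v1 = u1/2 + s*u2/2 /\ v2 = -s*u1/2 + u2/2).
Proof.
  intros hs hn e1 e2. unfold Rr1, Rr2.
  set (n := u1^2+u2^2) in *.
  assert (dot : u1*v1+u2*v2 = n/2) by (unfold n in *; nra).
  set (k := u1*v2 - u2*v1).
  assert (hk : k*k = 3/4*n*n).
  { assert (E: k*k = n*(v1^2+v2^2) - (u1*v1+u2*v2)^2) by (unfold k, n; ring).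
    rewrite E, e1, dot. field. }
  assert (Hv1 : v1*n = (u1*v1+u2*v2)*u1 - k*u2) by (unfold k, n; ring).
  assert (Hv2 : v2*n = (u1*v1+u2*v2)*u2 + k*u1) by (unfold k, n; ring).
  rewrite dot in Hv1, Hv2.
  assert ((k - s*n/2)*(k + s*n/2) = 0).
  { clearbody k n. assert (E2: (k - s*n/2)*(k + s*n/2) = k*k - (s*s)*n*n/4) by field. rewrite E2, hk, hs. field. }
  apply Rmult_integral in H. destruct H as [h|h].
  - left. assert (k = s*n/2) by lra. rewrite H in Hv1, Hv2. split.
    + apply (Rmult_eq_reg_r n); [|lra]. rewrite Hv1. field.
    + apply (Rmult_eq_reg_r n); [|lra]. rewrite Hv2. field.
  - right. assert (k = -(s*n/2)) by lra. rewrite H in Hv1, Hv2. split.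
    + apply (Rmult_eq_reg_r n); [|lra]. rewrite Hv1. field.
    + apply (Rmult_eq_reg_r n); [|lra]. rewrite Hv2. field.
Qed.

Lemma dist2_eq (p q : point) : dist2 p q = sqrt ((fst q - fst p)^2 + (snd q - snd p)^2).
Proof. unfold dist2. f_equal. ring. Qed.

Theorem mainTheorem17 (a : R) (ha1 : 1 < a) (ha2 : a <= sqrt 2)
  (p : point) (hp : on_ellipse a p) :
  exists q r : point,
    inscribed_equilateral a p q r /\
    forall q' r' : point, inscribed_equilateral a p q' r' ->
      (q' = q /\ r' = r) \/ (q' = r /\ r' = q).
Proof.
  destruct p as [x0 y0].
  set (b := 1/(a*a)).
  assert (ha0 : 0 < a) by lra.
  assert (haa : a*a <= 2).
  { assert (a*a <= sqrt 2 * sqrt 2) by (apply Rmult_le_compat; lra).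
    rewrite sqrt_sqrt in H; lra. }
  assert (hb1 : 1/2 <= b).
  { unfold b. apply (Rmult_le_reg_r (a*a)); [nra|]. field_simplify; lra. }
  assert (hb2 : b < 1).
  { unfold b. apply (Rmult_lt_reg_r (a*a)); [nra|]. field_simplify; nra. }
  assert (hpb : b*x0^2 + y0^2 = 1).
  { unfold on_ellipse in hp. simpl in hp. rewrite <- hp. unfold b. field. lra. }
  set (A := b*x0).
  assert (hAB : 0 < A^2 + y0^2).
  { unfold A. destruct (Req_dec x0 0).
    - subst. assert (y0^2 = 1) by nra. lra.
    - assert (0 < x0^2) by (apply sq_pos; auto). nra. }
  assert (ell : forall q : point, on_ellipse a q <-> Ef b A y0 (fst q - x0) (snd q - y0) = 0).
  { intro q. unfold on_ellipse, Ef, Lf, Qf, A.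
    replace ((fst q / a)^2) with (b*(fst q)^2) by (unfold b; field; lra).
    split; intro h; nra. }
  clearbody A b.
  set (s := sqrt 3).
  assert (hs : s*s = 3) by (apply sqrt_sqrt; lra).
  destruct (existence s b A y0 hs hb1 hb2 hAB) as [u1 [u2 [hu [e1 e2]]]].
  set (q := (x0+u1, y0+u2)). set (r := (x0 + Rr1 s u1 u2, y0 + Rr2 s u1 u2)).
  assert (hnR := R_norm s u1 u2 hs). assert (hnD := R_diff s u1 u2 hs).
  exists q, r. split.
  - split; [|split; [|split]].
    + apply ell. simpl. replace (x0-x0) with 0 by ring. replace (y0-y0) with 0 by ring.
      unfold Ef, Lf, Qf. ring.
    + apply ell. simpl. replace (x0+u1-x0) with u1 by ring. replace (y0+u2-y0) with u2 by ring. exact e1.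
    + apply ell. simpl. replace (x0+Rr1 s u1 u2-x0) with (Rr1 s u1 u2) by ring.
      replace (y0+Rr2 s u1 u2-y0) with (Rr2 s u1 u2) by ring. exact e2.
    + unfold equilateral.
      assert (d1 : dist2 (x0,y0) q = sqrt (u1^2+u2^2)) by (rewrite dist2_eq; f_equal; cbn [q fst snd]; ring).
      assert (d2 : dist2 q r = sqrt (u1^2+u2^2)) by (rewrite dist2_eq; f_equal; cbn [q r fst snd]; rewrite <- hnD; ring).
      assert (d3 : dist2 r (x0,y0) = sqrt (u1^2+u2^2)) by (rewrite dist2_eq; f_equal; cbn [q r fst snd]; rewrite <- hnR; ring).
      rewrite d1, d2, d3.
      split; [|split; [|split]]; try (split; reflexivity).
      * intro h. injection h; intros. nra.
      * intro h. injection h; intros.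
        assert (u1 - Rr1 s u1 u2 = 0) by lra. assert (u2 - Rr2 s u1 u2 = 0) by lra.
        rewrite H1, H2 in hnD. nra.
      * intro h. injection h; intros.
        assert (Rr1 s u1 u2 = 0) by lra. assert (Rr2 s u1 u2 = 0) by lra.
        rewrite H1, H2 in hnR. nra.
  - intros [q1 q2] [r1 r2] [_ [hq [hr [hpq [hqr [hrp [d1 d2]]]]]]].
    apply ell in hq. apply ell in hr. cbn [fst snd] in hq, hr.
    assert (D1 : dist2 (x0,y0) (q1,q2) = sqrt ((q1-x0)^2+(q2-y0)^2)) by (rewrite dist2_eq; reflexivity).
    assert (D2 : dist2 (q1,q2) (r1,r2) = sqrt (((q1-x0)-(r1-x0))^2+((q2-y0)-(r2-y0))^2)) by (rewrite dist2_eq; f_equal; cbn [fst snd]; ring).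
    assert (D3 : dist2 (r1,r2) (x0,y0) = sqrt ((r1-x0)^2+(r2-y0)^2)) by (rewrite dist2_eq; f_equal; cbn [fst snd]; ring).
    rewrite D1, D2 in d1. rewrite D2, D3 in d2. clear D1 D2 D3.
    set (w1 := q1 - x0) in *. set (w2 := q2 - y0) in *.
    set (v1 := r1 - x0) in *. set (v2 := r2 - y0) in *.
    assert (hw : 0 < w1^2 + w2^2).
    { destruct (Req_dec w1 0); destruct (Req_dec w2 0).
      - exfalso. apply hpq. unfold w1, w2 in *. f_equal; lra.
      - assert (0 < w2^2) by (apply sq_pos; auto). nra.
      - assert (0 < w1^2) by (apply sq_pos; auto). nra.
      - assert (0 < w2^2) by (apply sq_pos; auto). nra. }
    assert (hsq : forall x y : R, 0 <= x^2 + y^2) by (intros; nra).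
    apply sqrt_inj in d1; try apply hsq. apply sqrt_inj in d2; try apply hsq.
    destruct (rot_lemma s w1 w2 v1 v2 hs hw ltac:(lra) ltac:(lra)) as [[h1 h2]|[h1 h2]].
    + left. rewrite h1, h2 in hr.
      destruct (uniqueness s b A y0 hs hb1 hb2 hAB u1 u2 w1 w2 hu hw e1 e2 hq hr) as [k1 k2].
      rewrite k1, k2 in h1, h2.
      change (q1 - x0 = u1) in k1. change (q2 - y0 = u2) in k2. change (r1 - x0 = Rr1 s u1 u2) in h1. change (r2 - y0 = Rr2 s u1 u2) in h2.
      unfold q, r. split; f_equal; lra.
    + right.
      assert (g1 : Rr1 s v1 v2 = w1).
      { rewrite h1, h2; unfold Rr1.
        replace ((w1 / 2 + s * w2 / 2) / 2 - s * (- s * w1 / 2 + w2 / 2) / 2) with ((1+s*s)/4*w1) by field.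
        rewrite hs; field. }
      assert (g2 : Rr2 s v1 v2 = w2).
      { rewrite h1, h2; unfold Rr2.
        replace (s * (w1 / 2 + s * w2 / 2) / 2 + (- s * w1 / 2 + w2 / 2) / 2) with ((1+s*s)/4*w2) by field.
        rewrite hs; field. }
      assert (hv : 0 < v1^2+v2^2) by lra.
      rewrite <- g1, <- g2 in hq.
      destruct (uniqueness s b A y0 hs hb1 hb2 hAB u1 u2 v1 v2 hu hv e1 e2 hr hq) as [k1 k2].
      rewrite k1, k2 in g1, g2.
      change (r1 - x0 = u1) in k1. change (r2 - y0 = u2) in k2.
      change (Rr1 s u1 u2 = q1 - x0) in g1. change (Rr2 s u1 u2 = q2 - y0) in g2.
      unfold q, r. split; f_equal; lra.
Qed.
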